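(* Let $\alpha\in(-\infty,0)\cup(0,1)$, $\gamma\in(0,1]$, let $h:\mathbb{R}\to\mathbb{R}$ be continuous with $m\le h\le 1$ for some $m\in(0,1)$, and let $A$ be a continuous, bounded, nonnegative function on $\mathbb{R}$. Define $h_A(x,y)=\frac1\alpha x^\alpha h(y)+\frac1\alpha A(y)x^{\alpha(1-\gamma)}$ for $(x,y)\in\mathbb{R}_+\times\mathbb{R}$. Then for each $y\in\mathbb{R}$, $x\mapsto h_A(x,y)$ is strictly increasing and strictly concave on $\mathbb{R}_+$, with $\frac{\partial}{\partial x}h_A(0+,y)=\infty$ and $\frac{\partial}{\partial x}h_A(\infty,y)=0$. Moreover there exist constants $\vartheta\in(0,1)$ and $\varrho\in(1,\infty)$ such that $\vartheta\frac{\partial}{\partial x}h_A(x,y)\ge\frac{\partial}{\partial x}h_A(\varrho x,y)$ for all $(x,y)\in\mathbb{R}_+\times\mathbb{R}$. Furthermore, if $\alpha\in(0,1)$ there exist constants $\kappa_1\in(0,\infty)$ and $\rho_1\in(0,1)$ such that $0<h_A(x,y)\le\kappa_1(1+x^{\rho_1})$ for all $(x,y)\in\mathbb{R}_+\times\mathbb{R}$; if $\alpha\in(-\infty,0)$ there exist constants $\kappa_2\in(-\infty,0)$ and $\rho_2\in(-\infty,0)$ such that $0>h_A(x,y)\ge\kappa_2(1+x^{\rho_2})$ for all $(x,y)\in\mathbb{R}_+\times\mathbb{R}$. *)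

(* Defs.v *)
From Stdlib Require Import Reals.
From Coquelicot Require Import Coquelicot.
Open Scope R_scope.

(* h_A(x,y) = (1/alpha) x^alpha h(y) + (1/alpha) A(y) x^(alpha(1-gamma)),
   for x > 0 (real powers via Rpower, meaningful for x > 0). *)
Definition hA (alpha gamma : R) (h A : R -> R) (x y : R) : R :=
  / alpha * Rpower x alpha * h y + / alpha * A y * Rpower x (alpha * (1 - gamma)).

Definition dxhA (alpha gamma : R) (h A : R -> R) (x y : R) : R :=
  Derive (fun z => hA alpha gamma h A z y) x.

(* Main.v *)
Require Import Defs.
From Stdlib Require Import Reals Lra Psatz.
From Coquelicot Require Import Coquelicot.
Open Scope R_scope.

Lemma exp_le_mono a b : a <= b -> exp a <= exp b.
Proof. intros [H|H]. left; now apply exp_increasing. right; now subst. Qed.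

Lemma rp_pos x e : 0 < Rpower x e.
Proof. unfold Rpower; apply exp_pos. Qed.

Lemma rp_lt_neg e x1 x2 : e < 0 -> 0 < x1 -> x1 < x2 -> Rpower x2 e < Rpower x1 e.
Proof.
  intros He H1 H2. unfold Rpower; apply exp_increasing.
  assert (ln x1 < ln x2) by (apply ln_increasing; lra). nra.
Qed.

Lemma rp_le_npos e x1 x2 : e <= 0 -> 0 < x1 -> x1 < x2 -> Rpower x2 e <= Rpower x1 e.
Proof.
  intros He H1 H2. unfold Rpower; apply exp_le_mono.
  assert (ln x1 < ln x2) by (apply ln_increasing; lra). nra.
Qed.

Lemma rp_one e : Rpower 1 e = 1.
Proof. unfold Rpower; rewrite ln_1, Rmult_0_r; apply exp_0. Qed.

Lemma mid_pow x a c : 0 <= c <= 1 -> Rpower x (a * c) <= 1 + Rpower x a.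
Proof.
  intros Hc. unfold Rpower.
  assert (Hp := exp_pos (a * ln x)).
  destruct (Rle_or_lt 0 (a * ln x)) as [Hu|Hu].
  - assert (exp (a * c * ln x) <= exp (a * ln x)) by (apply exp_le_mono; nra). lra.
  - assert (exp (a * c * ln x) <= exp 0) by (apply exp_le_mono; nra).
    rewrite exp_0 in H. lra.
Qed.

Lemma small_pow e K : e < 0 -> 0 < K ->
  exists d, 0 < d /\ forall x, 0 < x < d -> K < Rpower x e.
Proof.
  intros He HK. exists (exp (ln K / e)). split. apply exp_pos.
  intros x [H0 H1]. unfold Rpower.
  assert (ln x < ln K / e).
  { rewrite <- (ln_exp (ln K / e)). apply ln_increasing; lra. }
  rewrite <- (exp_ln K) at 1 by lra. apply exp_increasing.
  assert (ln K = (ln K / e) * e) by (field; lra). nra.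
Qed.

Lemma big_pow e K : e < 0 -> 0 < K ->
  exists X, 0 < X /\ forall x, X < x -> Rpower x e < K.
Proof.
  intros He HK. exists (exp (ln K / e)). split. apply exp_pos.
  intros x H1. unfold Rpower.
  assert (Hx : 0 < x) by (pose proof (exp_pos (ln K / e)); lra).
  assert (ln K / e < ln x).
  { rewrite <- (ln_exp (ln K / e)). apply ln_increasing; try lra. apply exp_pos. }
  rewrite <- (exp_ln K) by lra. apply exp_increasing.
  assert (ln K = (ln K / e) * e) by (field; lra). nra.
Qed.

Definition dh (alpha gamma : R) (h A : R -> R) (x y : R) : R :=
  h y * Rpower x (alpha - 1) + A y * (1 - gamma) * Rpower x (alpha * (1 - gamma) - 1).

Lemma hA_is_derive alpha gamma h A x y : alpha <> 0 -> 0 < x ->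
  is_derive (fun z => hA alpha gamma h A z y) x (dh alpha gamma h A x y).
Proof.
  intros Ha Hx.
  assert (H1 := proj2 (is_derive_Reals _ _ _) (derivable_pt_lim_power x alpha Hx)).
  assert (H2 := proj2 (is_derive_Reals _ _ _)
     (derivable_pt_lim_power x (alpha * (1 - gamma)) Hx)).
  assert (H := is_derive_plus _ _ _ _ _ (is_derive_scal _ _ (/alpha * h y) _ H1)
                                        (is_derive_scal _ _ (/alpha * A y) _ H2)).
  eapply is_derive_ext; [|replace (dh alpha gamma h A x y) with
     (plus ((/alpha * h y) * (alpha * Rpower x (alpha - 1)))
           ((/alpha * A y) * ((alpha * (1 - gamma)) * Rpower x (alpha * (1 - gamma) - 1))));
     [exact H|]].
  - intros t. unfold hA, plus; simpl. ring.
  - unfold dh, plus; simpl. field. exact Ha.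
Qed.

Lemma hA_dpl alpha gamma h A x y : alpha <> 0 -> 0 < x ->
  derivable_pt_lim (fun z => hA alpha gamma h A z y) x (dh alpha gamma h A x y).
Proof. intros; apply is_derive_Reals, hA_is_derive; auto. Qed.

Lemma dxhA_eq alpha gamma h A x y : alpha <> 0 -> 0 < x ->
  dxhA alpha gamma h A x y = dh alpha gamma h A x y.
Proof. intros; unfold dxhA; apply is_derive_unique, hA_is_derive; auto. Qed.

Lemma concave_aux (f f' : R -> R) :
  (forall x, 0 < x -> derivable_pt_lim f x (f' x)) ->
  (forall a b, 0 < a -> a < b -> f' b < f' a) ->
  forall x1 x2 t, 0 < x1 -> x1 < x2 -> 0 < t < 1 ->
  t * f x1 + (1 - t) * f x2 < f (t * x1 + (1 - t) * x2).
Proof.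
  intros Hd Hdec x1 x2 t H1 H12 Ht.
  set (z := t * x1 + (1 - t) * x2).
  assert (Hz1 : x1 < z) by (unfold z; nra).
  assert (Hz2 : z < x2) by (unfold z; nra).
  destruct (MVT_cor2 f f' x1 z Hz1) as [c1 [E1 Hc1]].
  { intros c Hc; apply Hd; lra. }
  destruct (MVT_cor2 f f' z x2 Hz2) as [c2 [E2 Hc2]].
  { intros c Hc; apply Hd; lra. }
  assert (Hlt : f' c2 < f' c1) by (apply Hdec; lra).
  assert (Ez1 : z - x1 = (1 - t) * (x2 - x1)) by (unfold z; ring).
  assert (Ez2 : x2 - z = t * (x2 - x1)) by (unfold z; ring).
  rewrite Ez1 in E1. rewrite Ez2 in E2.
  assert (Hp : 0 < t * (1 - t) * (x2 - x1)) by
    (apply Rmult_lt_0_compat; [apply Rmult_lt_0_compat|]; lra).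
  assert (0 < t * (1 - t) * (x2 - x1) * (f' c1 - f' c2)) by
    (apply Rmult_lt_0_compat; lra).
  nra.
Qed.

Lemma incr_aux (f f' : R -> R) :
  (forall x, 0 < x -> derivable_pt_lim f x (f' x)) ->
  (forall x, 0 < x -> 0 < f' x) ->
  forall x1 x2, 0 < x1 -> x1 < x2 -> f x1 < f x2.
Proof.
  intros Hd Hp x1 x2 H1 H12.
  destruct (MVT_cor2 f f' x1 x2 H12) as [c [E Hc]].
  { intros c Hc; apply Hd; lra. }
  assert (0 < f' c) by (apply Hp; lra). nra.
Qed.

Theorem lemma3p1 (alpha gamma m : R) (h A : R -> R)
  (Halpha : alpha < 0 \/ (0 < alpha < 1))
  (Hgamma : 0 < gamma <= 1)
  (Hm : 0 < m < 1)
  (Hhc : continuity h)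
  (Hhb : forall y, m <= h y <= 1)
  (HAc : continuity A)
  (HAb : exists B, forall y, A y <= B)
  (HAn : forall y, 0 <= A y) :
  (forall y : R,
     (forall x, 0 < x -> ex_derive (fun z => hA alpha gamma h A z y) x) /\
     (forall x1 x2, 0 < x1 -> x1 < x2 ->
        hA alpha gamma h A x1 y < hA alpha gamma h A x2 y) /\
     (forall x1 x2 t, 0 < x1 -> 0 < x2 -> x1 <> x2 -> 0 < t < 1 ->
        t * hA alpha gamma h A x1 y + (1 - t) * hA alpha gamma h A x2 y
        < hA alpha gamma h A (t * x1 + (1 - t) * x2) y) /\
     filterlim (fun x => dxhA alpha gamma h A x y) (at_right 0) (Rbar_locally p_infty) /\
     filterlim (fun x => dxhA alpha gamma h A x y) (Rbar_locally p_infty) (Rbar_locally 0)) /\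
  (exists theta rho, 0 < theta < 1 /\ 1 < rho /\
     forall x y, 0 < x ->
       theta * dxhA alpha gamma h A x y >= dxhA alpha gamma h A (rho * x) y) /\
  (0 < alpha < 1 ->
     exists kappa1 rho1, 0 < kappa1 /\ 0 < rho1 < 1 /\
       forall x y, 0 < x ->
         0 < hA alpha gamma h A x y <= kappa1 * (1 + Rpower x rho1)) /\
  (alpha < 0 ->
     exists kappa2 rho2, kappa2 < 0 /\ rho2 < 0 /\
       forall x y, 0 < x ->
         kappa2 * (1 + Rpower x rho2) <= hA alpha gamma h A x y < 0).
Proof.
  assert (Ha0 : alpha <> 0) by lra.
  assert (Ha1 : alpha - 1 < 0) by lra.
  assert (Hb1 : alpha * (1 - gamma) - 1 < 0) by (destruct Halpha; nra).
  assert (Hdpos : forall x y, 0 < x -> 0 < dh alpha gamma h A x y).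
  { intros x y Hx. unfold dh. pose proof (Hhb y). pose proof (HAn y).
    pose proof (rp_pos x (alpha - 1)). pose proof (rp_pos x (alpha * (1 - gamma) - 1)).
    assert (0 < h y * Rpower x (alpha - 1)) by (apply Rmult_lt_0_compat; lra).
    assert (0 <= A y * (1 - gamma) * Rpower x (alpha * (1 - gamma) - 1))
      by (apply Rmult_le_pos; [apply Rmult_le_pos|]; lra).
    lra. }
  assert (Hddec : forall y a b, 0 < a -> a < b ->
            dh alpha gamma h A b y < dh alpha gamma h A a y).
  { intros y a b Ha Hab. unfold dh. pose proof (Hhb y). pose proof (HAn y).
    pose proof (rp_lt_neg _ _ _ Ha1 Ha Hab).
    pose proof (rp_le_npos _ _ _ (Rlt_le _ _ Hb1) Ha Hab).
    assert (h y * Rpower b (alpha - 1) < h y * Rpower a (alpha - 1))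
      by (apply Rmult_lt_compat_l; lra).
    assert (A y * (1 - gamma) * Rpower b (alpha * (1 - gamma) - 1) <=
            A y * (1 - gamma) * Rpower a (alpha * (1 - gamma) - 1))
      by (apply Rmult_le_compat_l; [apply Rmult_le_pos|]; lra).
    lra. }
  split; [|split; [|split]].
  - intros y. split; [|split; [|split; [|split]]].
    + intros x Hx. eexists. apply hA_is_derive; auto.
    + apply (incr_aux _ (fun x => dh alpha gamma h A x y)).
      * intros; apply hA_dpl; auto.
      * intros; apply Hdpos; auto.
    + intros x1 x2 t H1 H2 H12 Ht.
      destruct (Rlt_or_le x1 x2) as [Hlt|Hle].
      * apply (concave_aux (fun z => hA alpha gamma h A z y) (fun x => dh alpha gamma h A x y)); auto.
        intros; apply hA_dpl; auto.
      * assert (Hlt : x2 < x1) by lra.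
        pose proof (concave_aux (fun z => hA alpha gamma h A z y)
          (fun x => dh alpha gamma h A x y)
          (fun x Hx => hA_dpl alpha gamma h A x y Ha0 Hx)
          (Hddec y) x2 x1 (1 - t) H2 Hlt ltac:(lra)) as HH.
        replace ((1 - t) * x2 + (1 - (1 - t)) * x1) with (t * x1 + (1 - t) * x2) in HH by ring.
        lra.
    + intros P [M HM].
      pose proof (Hhb y).
      destruct (small_pow (alpha - 1) ((Rabs M + 1) / m) Ha1) as [d [Hd Hd']].
      { apply Rdiv_lt_0_compat; [pose proof (Rabs_pos M)|]; lra. }
      exists (mkposreal d Hd). intros u Hu Hu0. simpl in Hu.
      assert (Hu' : Rabs (u - 0) < d) by exact Hu.
      rewrite Rminus_0_r, Rabs_right in Hu' by lra.
      apply HM. rewrite dxhA_eq by auto.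
      specialize (Hd' u ltac:(lra)).
      assert (Hm1 : m * ((Rabs M + 1) / m) = Rabs M + 1) by (field; lra).
      assert (m * ((Rabs M + 1) / m) < m * Rpower u (alpha - 1))
        by (apply Rmult_lt_compat_l; lra).
      assert (m * Rpower u (alpha - 1) <= h y * Rpower u (alpha - 1))
        by (apply Rmult_le_compat_r; [left; apply rp_pos| lra]).
      pose proof (Rle_abs M).
      pose proof (HAn y).
      assert (0 <= A y * (1 - gamma) * Rpower u (alpha * (1 - gamma) - 1))
        by (apply Rmult_le_pos; [apply Rmult_le_pos|left; apply rp_pos]; lra).
      unfold dh. lra.
    + intros P [eps HP].
      pose proof (Hhb y). pose proof (HAn y).
      set (C := A y * (1 - gamma)).
      assert (HC : 0 <= C) by (unfold C; apply Rmult_le_pos; lra).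
      destruct (big_pow (alpha - 1) (eps / 2) Ha1) as [X1 [HX1 HX1']].
      { pose proof (cond_pos eps); lra. }
      destruct (big_pow (alpha * (1 - gamma) - 1) (eps / 2 / (C + 1)) Hb1) as [X2 [HX2 HX2']].
      { pose proof (cond_pos eps). apply Rdiv_lt_0_compat; lra. }
      exists (Rmax X1 X2). intros x Hx.
      assert (Hx1 : X1 < x) by (eapply Rle_lt_trans; [apply Rmax_l|exact Hx]).
      assert (Hx2 : X2 < x) by (eapply Rle_lt_trans; [apply Rmax_r|exact Hx]).
      apply HP. rewrite dxhA_eq by lra.
      pose proof (Hdpos x y ltac:(lra)) as Hpos.
      specialize (HX1' x Hx1). specialize (HX2' x Hx2).
      pose proof (rp_pos x (alpha - 1)). pose proof (rp_pos x (alpha * (1 - gamma) - 1)).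
      assert (h y * Rpower x (alpha - 1) <= Rpower x (alpha - 1)) by nra.
      assert (C * Rpower x (alpha * (1 - gamma) - 1) <= (C + 1) * Rpower x (alpha * (1 - gamma) - 1)) by nra.
      assert ((C + 1) * Rpower x (alpha * (1 - gamma) - 1) < (C + 1) * (eps / 2 / (C + 1)))
        by (apply Rmult_lt_compat_l; lra).
      assert ((C + 1) * (eps / 2 / (C + 1)) = eps / 2) by (field; lra).
      change (Rabs (dh alpha gamma h A x y - 0) < eps).
      rewrite Rminus_0_r, Rabs_right by lra.
      unfold dh; fold C. lra.
  - set (ta := Rpower 2 (alpha - 1)). set (tb := Rpower 2 (alpha * (1 - gamma) - 1)).
    exists (Rmax ta tb), 2.
    assert (Hta : ta < 1) by (unfold ta; pose proof (rp_lt_neg (alpha - 1) 1 2 Ha1 ltac:(lra) ltac:(lra)) as Q; rewrite rp_one in Q; exact Q).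
    assert (Htb : tb < 1) by (unfold tb; pose proof (rp_lt_neg (alpha * (1 - gamma) - 1) 1 2 Hb1 ltac:(lra) ltac:(lra)) as Q; rewrite rp_one in Q; exact Q).
    assert (Hta0 : 0 < ta) by apply rp_pos.
    split; [split|split; [lra|]].
    + eapply Rlt_le_trans; [exact Hta0|apply Rmax_l].
    + apply Rmax_lub_lt; auto.
    + intros x y Hx. rewrite !dxhA_eq by lra. unfold dh.
      rewrite <- !(Rpower_mult_distr 2 x) by lra. fold ta tb.
      pose proof (Rmax_l ta tb). pose proof (Rmax_r ta tb).
      pose proof (Hhb y). pose proof (HAn y).
      pose proof (rp_pos x (alpha - 1)). pose proof (rp_pos x (alpha * (1 - gamma) - 1)).
      assert (0 <= (Rmax ta tb - ta) * (h y * Rpower x (alpha - 1)))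
        by (apply Rmult_le_pos; [|apply Rmult_le_pos]; lra).
      assert (0 <= (Rmax ta tb - tb) * (A y * (1 - gamma) * Rpower x (alpha * (1 - gamma) - 1)))
        by (apply Rmult_le_pos; [|apply Rmult_le_pos; [apply Rmult_le_pos|]]; lra).
      nra.
  - destruct HAb as [B HB].
    assert (HB0 : forall y, A y <= Rabs B) by (intros y; pose proof (Rle_abs B); pose proof (HB y); lra).
    intros Hpos. exists ((1 + Rabs B) / alpha), alpha.
    pose proof (Rabs_pos B).
    split; [apply Rdiv_lt_0_compat; lra|split; [lra|]].
    intros x y Hx. unfold hA.
    pose proof (Hhb y). pose proof (HAn y). pose proof (HB0 y).
    pose proof (rp_pos x alpha). pose proof (rp_pos x (alpha * (1 - gamma))).
    pose proof (mid_pow x alpha (1 - gamma) ltac:(lra)).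
    assert (Hia : 0 < / alpha) by (apply Rinv_0_lt_compat; lra).
    set (R1 := Rpower x alpha) in *. set (R2 := Rpower x (alpha * (1 - gamma))) in *.
    assert (0 < R1 * h y) by (apply Rmult_lt_0_compat; lra).
    assert (R1 * h y <= R1) by nra.
    assert (0 <= A y * R2) by (apply Rmult_le_pos; lra).
    assert (A y * R2 <= Rabs B * (1 + R1)) by nra.
    split.
    + assert (0 < / alpha * (R1 * h y)) by (apply Rmult_lt_0_compat; lra).
      assert (0 <= / alpha * (A y * R2)) by (apply Rmult_le_pos; lra).
      nra.
    + assert (/ alpha * (R1 * h y + A y * R2) <= / alpha * ((1 + Rabs B) * (1 + R1)))
        by (apply Rmult_le_compat_l; nra).
      unfold Rdiv. nra.
  - destruct HAb as [B HB].
    assert (HB0 : forall y, A y <= Rabs B) by (intros y; pose proof (Rle_abs B); pose proof (HB y); lra).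
    intros Hneg. exists ((1 + Rabs B) / alpha), alpha.
    pose proof (Rabs_pos B).
    assert (Hia : / alpha < 0) by (apply Rinv_lt_0_compat; lra).
    split; [unfold Rdiv; nra|split; [lra|]].
    intros x y Hx. unfold hA.
    pose proof (Hhb y). pose proof (HAn y). pose proof (HB0 y).
    pose proof (rp_pos x alpha). pose proof (rp_pos x (alpha * (1 - gamma))).
    pose proof (mid_pow x alpha (1 - gamma) ltac:(lra)).
    set (R1 := Rpower x alpha) in *. set (R2 := Rpower x (alpha * (1 - gamma))) in *.
    assert (0 < R1 * h y) by (apply Rmult_lt_0_compat; lra).
    assert (R1 * h y <= R1) by nra.
    assert (0 <= A y * R2) by (apply Rmult_le_pos; lra).
    assert (A y * R2 <= Rabs B * (1 + R1)) by nra.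
    split.
    + assert (/ alpha * ((1 + Rabs B) * (1 + R1)) <= / alpha * (R1 * h y + A y * R2))
        by (apply Rmult_le_compat_neg_l; nra).
      unfold Rdiv. nra.
    + assert (/ alpha * (R1 * h y) < 0) by nra.
      assert (/ alpha * (A y * R2) <= 0) by nra.
      nra.
Qed.
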